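(* Let $n\ge1$ and let $k_1\le k_2\le\cdots\le k_n$ be integers. Then $$\sum_{A} (-1)^{\#\{\text{special little triangles in }A\}+\#\{\text{entries of }A\text{ decorated with }\nwarrow\nearrow\}} \;=\; \sum_{G} 2^{r(G)},$$ where the left sum is over all arrowed Gelfand–Tsetlin patterns $A$ with bottom row $k_1,\ldots,k_n$, and the right sum is over all (undecorated) Gelfand–Tsetlin patterns $G$ with bottom row $k_1,\ldots,k_n$ such that no row other than the bottom row contains three equal entries; here $r(G)$ is the number of entries of $G$ that are not equal to both their $\nwarrow$-neighbor and their $\nearrow$-neighbor.
   Context: A Gelfand–Tsetlin pattern with $n$ rows is a triangular array of integers $(a_{i,j})_{1\le j\le i\le n}$, row $i$ being $a_{i,1},\ldots,a_{i,i}$, drawn so that $a_{i-1,j}$ sits between $a_{i,j}$ and $a_{i,j+1}$, satisfying $a_{i+1,j}\le a_{i,j}\le a_{i+1,j+1}$ for all $1\le j\le i<n$. Row $n$ is the bottom row. For an entry $a_{i,j}$: its $\nwarrow$-neighbor is $a_{i-1,j-1}$ and its $\nearrow$-neighbor is $a_{i-1,j}$ (when they exist; an entry lacking one of these neighbors is in particular not equal to both), its $\swarrow$-neighbor is $a_{i+1,j}$ and its $\searrow$-neighbor is $a_{i+1,j+1}$, and its left/right neighbors are $a_{i,j-1}$, $a_{i,j+1}$. An arrowed Gelfand–Tsetlin pattern is a Gelfand–Tsetlin pattern in which each entry either carries no decoration or carries exactly one decoration from $\{\nwarrow,\nearrow,\nwarrow\nearrow\}$ (the last one is called the double arrow), subject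 to: if an entry $a$ equals its $\nearrow$-neighbor and is decorated with $\nearrow$ or $\nwarrow\nearrow$, then the entry to the right of $a$ in the same row also equals $a$ and is decorated with $\nwarrow$ or $\nwarrow\nearrow$; and if $a$ equals its $\nwarrow$-neighbor and is decorated with $\nwarrow$ or $\nwarrow\nearrow$, then the entry to the left of $a$ in the same row also equals $a$ and is decorated with $\nearrow$ or $\nwarrow\nearrow$. A special little triangle is an entry $a$ that equals both its $\swarrow$-neighbor $b$ and its $\searrow$-neighbor $c$, where $b$ is decorated with $\nearrow$ or $\nwarrow\nearrow$ and $c$ is decorated with $\nwarrow$ or $\nwarrow\nearrow$. *)

(* Defs.v *)
From mathcomp Require Import all_boot all_order all_algebra.
Set Implicit Arguments. Unset Strict Implicit. Unset Printing Implicit Defensive.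
Import Order.TTheory GRing.Theory Num.Theory.
Local Open Scope ring_scope.

(* A (possibly decorated) triangular array is stored as the list of its rows,
   row i (1-based) being the (i-1)-th element, of length i.
   Entry a_{i,j} (1-based indices) is [ent x0 A i j]. *)
Definition ent {T : Type} (x0 : T) (A : seq (seq T)) (i j : nat) : T :=
  nth x0 (nth [::] A i.-1) j.-1.

(* Decorations: a pair of booleans (has_nw, has_ne).
   (false,false) = no decoration, (true,false) = NW arrow,
   (false,true) = NE arrow, (true,true) = double arrow. *)
Definition deco := (bool * bool)%type.
Definition all_decos : seq deco :=
  [:: (false, false); (true, false); (false, true); (true, true)].

Definition tri_shape {T : Type} (n : nat) (A : seq (seq T)) : bool :=
  (size A == n) && all (fun i => size (nth [::] A i.-1) == i) (iota 1 n).

Definition is_GT (n : nat) (k : seq int) (G : seq (seq int)) : bool :=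
  [&& tri_shape n G, nth [::] G n.-1 == k &
      all (fun i => all (fun j =>
         (ent (0:int) G i.+1 j <= ent (0:int) G i j) && (ent (0:int) G i j <= ent (0:int) G i.+1 j.+1))
        (iota 1 i)) (iota 1 n.-1)].

Definition vals (A : seq (seq (int * deco))) : seq (seq int) := map (map fst) A.
Definition dec (A : seq (seq (int * deco))) (i j : nat) : deco := snd (
  ent ((0 : int), (false, false)) A i j).
Definition val (A : seq (seq (int * deco))) (i j : nat) : int := ent (0:int) (vals A) i j.

Definition is_arrowed_GT (n : nat) (k : seq int) (A : seq (seq (int * deco))) : bool :=
  [&& tri_shape n A, is_GT n k (vals A) &
      all (fun i => all (fun j =>
        (* NE rule: a_{i,j} has a NE-neighbor a_{i-1,j} (i >= 2, j <= i-1) *)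
        [&& ((2 <= i)%N && (j <= i.-1)%N && (val A i j == val A i.-1 j)
              && (dec A i j).2)
            ==> ((val A i j.+1 == val A i j) && (dec A i j.+1).1) &
        (* NW rule: a_{i,j} has a NW-neighbor a_{i-1,j-1} (i >= 2, j >= 2) *)
            ((2 <= i)%N && (2 <= j)%N && (val A i j == val A i.-1 j.-1)
              && (dec A i j).1)
            ==> ((val A i j.-1 == val A i j) && (dec A i j.-1).2)])
        (iota 1 i)) (iota 1 n)].

Definition n_special (n : nat) (A : seq (seq (int * deco))) : nat :=
  \sum_(1 <= i < n) \sum_(1 <= j < i.+1)
    [&& val A i j == val A i.+1 j, val A i j == val A i.+1 j.+1,
        (dec A i.+1 j).2 & (dec A i.+1 j.+1).1].

Definition n_double (n : nat) (A : seq (seq (int * deco))) : nat :=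
  \sum_(1 <= i < n.+1) \sum_(1 <= j < i.+1) ((dec A i j).1 && (dec A i j).2).

Definition no_three_equal (n : nat) (G : seq (seq int)) : bool :=
  all (fun i => all (fun j1 => all (fun j2 => all (fun j3 =>
        ~~ [&& (j1 < j2)%N, (j2 < j3)%N,
               ent (0:int) G i j1 == ent (0:int) G i j2 & ent (0:int) G i j2 == ent (0:int) G i j3])
      (iota 1 i)) (iota 1 i)) (iota 1 i)) (iota 1 n.-1).

(* r(G): entries not equal to both their NW-neighbor and NE-neighbor
   (entries lacking one of these neighbors are counted). *)
Definition r_stat (n : nat) (G : seq (seq int)) : nat :=
  \sum_(1 <= i < n.+1) \sum_(1 <= j < i.+1)
    ~~ [&& (2 <= i)%N, (2 <= j)%N, (j <= i.-1)%N,
           ent (0:int) G i j == ent (0:int) G i.-1 j.-1 & ent (0:int) G i j == ent (0:int) G i.-1 j].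

Fixpoint rows_of {T : Type} (s : seq T) (m : nat) : seq (seq T) :=
  if m is m'.+1 then [seq x :: r | x <- s, r <- rows_of s m'] else [:: [::]].
Fixpoint tri_arrays {T : Type} (s : seq T) (m : nat) : seq (seq (seq T)) :=
  if m is m'.+1 then [seq rcons P r | P <- tri_arrays s m', r <- rows_of s m]
  else [:: [::]].

Definition int_range (lo hi : int) : seq int :=
  [seq lo + (m%:Z) | m <- iota 0 (`|hi - lo|%N.+1)].

(* All entries of a GT pattern with bottom row k lie between k_1 = head k and
   k_n = last k, so these enumerations contain every (arrowed) GT pattern with
   bottom row k, each exactly once. *)
Definition GT_candidates (n : nat) (k : seq int) : seq (seq (seq int)) :=
  tri_arrays (int_range (head 0 k) (last 0 k)) n.
Definition AGT_candidates (n : nat) (k : seq int) : seq (seq (seq (int * deco))) :=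
  tri_arrays [seq (x, d) | x <- int_range (head 0 k) (last 0 k), d <- all_decos] n.

(* Main.v *)
Require Import Defs.
From mathcomp Require Import all_boot all_order all_algebra.
From mathcomp Require Import ring lra zify.
Set Implicit Arguments. Unset Strict Implicit. Unset Printing Implicit Defensive.
Import Order.TTheory GRing.Theory Num.Theory.
Local Open Scope ring_scope.

Definition dd : deco := (false, false).
Definition link := (bool * bool)%type.

Definition lok (l : link) (d0 d1 : deco) : bool :=
  (l.1 && d0.2 ==> (l.1 && l.2) && d1.1) && (l.2 && d1.1 ==> (l.1 && l.2) && d0.2).
Definition lsp (l : link) (d0 d1 : deco) : nat := [&& l.1, l.2, d0.2 & d1.1].

Fixpoint okL (ls : seq link) (v : seq deco) : bool :=
  match ls, v with l :: ls', d0 :: v' => lok l d0 (head dd v') && okL ls' v' | _, _ => true end.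
Fixpoint spL (ls : seq link) (v : seq deco) : nat :=
  match ls, v with l :: ls', d0 :: v' => (lsp l d0 (head dd v') + spL ls' v')%N | _, _ => 0%N end.
Definition dblL (v : seq deco) : nat := count (fun d : deco => d.1 && d.2) v.

Definition wgt (ls : seq link) (v : seq deco) : int :=
  if okL ls v then (-1) ^+ (spL ls v + dblL v) else 0.

Definition Hsum (phi : bool -> int) (ls : seq link) : int :=
  \sum_(v <- rows_of all_decos (size ls).+1) phi (head dd v).1 * wgt ls v.

Definition step (l : link) (u : int * int) : int * int :=
  match l with
  | (false, false) => (2 * (u.1 + u.2), 0)
  | (true, false) => (u.1 + u.2, u.1 + u.2)
  | (false, true) => (2 * u.1, 0)
  | (true, true) => (u.1 - u.2, u.1 + u.2)
  end.
Fixpoint Hrow (ls : seq link) : int * int :=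
  match ls with [::] => (2, 0) | l :: ls' => step l (Hrow ls') end.

Lemma big_rowsS (T : Type) (s : seq T) m (F : seq T -> int) :
  \sum_(v <- rows_of s m.+1) F v = \sum_(x <- s) \sum_(r <- rows_of s m) F (x :: r).
Proof. exact: big_allpairs_dep. Qed.

Lemma Hsum_lin phi ls : Hsum phi ls = phi false * (Hrow ls).1 + phi true * (Hrow ls).2.
Proof.
elim: ls phi => [|l ls IH] phi.
  rewrite /Hsum big_rowsS /= !big_cons !big_nil /= /wgt /dblL /=.
  rewrite ?addn0 ?add0n ?expr0 ?expr1; ring.
rewrite /Hsum big_rowsS.
set psi := fun (d : deco) (x : bool) =>
  if lok l d (x, false) then (-1) ^+ (lsp l d (x, false)) else (0:int).
have E : forall d : deco, \sum_(r <- rows_of all_decos (size ls).+1)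
     phi (head dd (d :: r)).1 * wgt (l :: ls) (d :: r)
   = phi d.1 * (-1) ^+ (d.1 && d.2) * Hsum (psi d) ls.
  move=> d; rewrite /Hsum big_distrr /=; apply: eq_bigr => r _.
  rewrite /wgt /= /psi.
  have -> : lok l d (head dd r) = lok l d ((head dd r).1, false).
    by rewrite /lok /=.
  have -> : lsp l d (head dd r) = lsp l d ((head dd r).1, false).
    by rewrite /lsp /=.
  case: (lok l d _) => /=; last by rewrite !(mul0r, mulr0).
  case: (okL ls r); last by rewrite !(mul0r, mulr0).
  rewrite /dblL /= !exprD; ring.
rewrite (eq_bigr _ (fun d _ => E d)) {E}.
rewrite /all_decos !big_cons big_nil !IH.
rewrite {}/psi; case: l => [[] []] /=; rewrite /lok /lsp /=; case: (Hrow ls) => u0 u1 /=; rewrite ?expr0 ?expr1; ring.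
Qed.

Fixpoint Fpair (ls : seq link) : int * int :=
  match ls with
  | [::] => (2, 2)
  | l :: ls' =>
    let p := Fpair ls' in
    let Y := if l.2 then p.1 else p.2 in
    let e1 := (head (false, false) ls').1 in
    (if l.1 then (if l.2 && e1 then 0 else Y) else 2 * Y, 2 * Y)
  end.

Definition Danger (ls : seq link) : bool :=
  match ls with
  | l :: l1 :: rest => [&& l.1, l.2, l1.1, l1.2 & (head (false, false) rest).1]
  | _ => false
  end.

Fixpoint NoF (ls : seq link) : bool :=
  match ls with
  | [::] => true
  | l :: ls' => ~~ (l.2 && Danger ls') && NoF ls'
  end.

Lemma Hrow_inv ls : NoF ls ->
  (Hrow ls).1 + (Hrow ls).2 = (Fpair ls).2 /\
  ((Hrow ls).1 = (Fpair ls).1 \/ Danger ls).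
Proof.
elim: ls => [|l ls IH] /=; first by split => //; left.
case/andP => Hd /IH [IHs IHo].
case: ls IH IHs IHo Hd => [|l1 ls] _ /=.
  case: l => [[] []] /=; rewrite /step /=; split; try ring; left; ring.
case: (Hrow ls) => u0 u1; case: (Fpair ls) => f1 f2.
case: l => [[] []]; case: l1 => [[] []] /=;
  case: ls => [|[[] []] ls] /=; try case: (head (false, false) ls).1 => /=;
  move=> H1 H2 H3; (case: H2 => H2; [idtac | try discriminate]);
  (split; [lia | first [ by right | left; lia ]]).
Qed.

Fixpoint fullsR (wp : bool) (ls : seq link) : seq bool :=
  match ls with [::] => [:: false] | l :: ls' => (wp && l.1) :: fullsR l.2 ls' end.

Fixpoint noadj (s : seq bool) : bool :=
  match s with [::] => true | x :: s' => ~~ (x && head false s') && noadj s' end.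

Definition cl (s : seq bool) : int :=
  if noadj s then 2 ^+ (count negb s) else 0.

Lemma head_fullsR w ls : head false (fullsR w ls) = w && (head (false, false) ls).1.
Proof. by case: ls => [|l ls] /=; rewrite ?andbF. Qed.

Lemma Fpair_cl ls wp :
  (if wp then (Fpair ls).1 else (Fpair ls).2) = cl (fullsR wp ls).
Proof.
elim: ls wp => [|l ls IH] wp.
  by case: wp; rewrite /cl /= expr1.
have HY := IH l.2.
rewrite /= HY /cl /= head_fullsR.
case: (noadj _); case: wp; case: l {HY} => [[] []] /=.
all: try case: (head _ _).1; rewrite /= ?add0n ?add1n ?exprS ?mulr0 //.
Qed.

Lemma row_link ls : NoF ls -> Hsum (fun _ => 1) ls = cl (fullsR false ls).
Proof.
move=> H; rewrite Hsum_lin !mul1r -(Fpair_cl ls false) /=.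
by case: (Hrow_inv H).
Qed.


Definition rowcond (m : nat) (Vb Vc : nat -> int) (Db : nat -> deco) : bool :=
  all (fun j =>
    [&& ((2 <= m)%N && (j <= m.-1)%N && (Vb j == Vc j) && (Db j).2)
          ==> ((Vb j.+1 == Vb j) && (Db j.+1).1) &
        ((2 <= m)%N && (2 <= j)%N && (Vb j == Vc j.-1) && (Db j).1)
          ==> ((Vb j.-1 == Vb j) && (Db j.-1).2)]) (iota 1 m).

Definition links (m : nat) (b c : seq int) : seq link :=
  [seq (nth 0 b k == nth 0 c k, nth 0 b k.+1 == nth 0 c k) | k <- iota 0 m.-1].

Lemma size_links m b c : size (links m b c) = m.-1.
Proof. by rewrite size_map size_iota. Qed.

Lemma nth_links m b c k : (k < m.-1)%N ->
  nth (false, false) (links m b c) k = (nth 0 b k == nth 0 c k, nth 0 b k.+1 == nth 0 c k).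
Proof. by move=> h; rewrite (nth_map 0%N) ?size_iota // nth_iota. Qed.

Lemma okL_all ls v : size v = (size ls).+1 ->
  okL ls v = all (fun k => lok (nth (false,false) ls k) (nth dd v k) (nth dd v k.+1))
                 (iota 0 (size ls)).
Proof.
elim: ls v => [|l ls IH] [|d0 v] //= [sv].
rewrite IH // -add1n iotaDl all_map.
by case: v sv.
Qed.

Lemma eqb3 (x y z : int) : x <= y -> y <= z -> (z == x) = (x == y) && (z == y).
Proof.
move=> h1 h2.
by case: eqP => ?; case: eqP => ?; case: eqP => ? /=; lia.
Qed.


Definition rowsp (m : nat) (Vb Vc : nat -> int) (Db : nat -> deco) : nat :=
  \sum_(1 <= j < m) [&& Vc j == Vb j, Vc j == Vb j.+1, (Db j).2 & (Db j.+1).1].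
Definition rowdb (m : nat) (Db : nat -> deco) : nat :=
  \sum_(1 <= j < m.+1) ((Db j).1 && (Db j).2).
Definition rowr (m : nat) (Vb Vc : nat -> int) : nat :=
  \sum_(1 <= j < m.+1) ~~ [&& (2 <= m)%N, (2 <= j)%N, (j <= m.-1)%N,
                            Vb j == Vc j.-1 & Vb j == Vc j].
Definition nte3 (i : nat) (Vr : nat -> int) : bool :=
  all (fun j1 => all (fun j2 => all (fun j3 =>
        ~~ [&& (j1 < j2)%N, (j2 < j3)%N, Vr j1 == Vr j2 & Vr j2 == Vr j3])
      (iota 1 i)) (iota 1 i)) (iota 1 i).

Lemma spL_sum ls v : size v = (size ls).+1 ->
  spL ls v = (\sum_(0 <= k < size ls) lsp (nth (false,false) ls k) (nth dd v k) (nth dd v k.+1))%N.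
Proof.
elim: ls v => [|l ls IH] [|d0 v] //= [sv]; try by rewrite big_geq.
rewrite big_nat_recl // IH //.
Qed.

Lemma dblL_sum v : dblL v = (\sum_(0 <= k < size v) ((nth dd v k).1 && (nth dd v k).2))%N.
Proof. by rewrite /dblL -sumn_count sumnE big_map (big_nth dd). Qed.

Lemma nth_fullsR wp ls p :
  nth false (fullsR wp ls) p =
  if p is p'.+1 then (nth (false,false) ls p').2 && (nth (false,false) ls p).1
  else wp && (nth (false,false) ls 0).1.
Proof.
elim: ls wp p => [|l ls IH] wp p.
  by case: p => [|p] /=; rewrite ?andbF // nth_nil.
case: p => [|p] //=.
by rewrite IH; case: p.
Qed.

Lemma size_fullsR wp ls : size (fullsR wp ls) = (size ls).+1.
Proof. by elim: ls wp => [|l ls IH] wp //=; rewrite IH. Qed.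

Lemma noadj_all s :
  noadj s = all (fun p => ~~ (nth false s p && nth false s p.+1)) (iota 0 (size s)).
Proof.
elim: s => [|x s IH] //=.
by rewrite IH -add1n iotaDl all_map; case: s {IH}.
Qed.

Lemma Danger_nth ls : Danger ls =
  [&& (nth (false,false) ls 0).1, (nth (false,false) ls 0).2, (nth (false,false) ls 1).1,
      (nth (false,false) ls 1).2 & (nth (false,false) ls 2).1].
Proof. by case: ls => [|l1 [|l2 [|l3 r]]] /=; rewrite ?andbF. Qed.

Lemma NoF_all ls :
  (forall k, ~~ [&& (nth (false,false) ls k).2, (nth (false,false) ls k.+1).1,
     (nth (false,false) ls k.+1).2, (nth (false,false) ls k.+2).1,
     (nth (false,false) ls k.+2).2 & (nth (false,false) ls k.+3).1]) -> NoF ls.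
Proof.
elim: ls => [|l ls IH] H //=.
apply/andP; split; last by apply: IH => k; exact: (H k.+1).
by rewrite Danger_nth; exact: (H 0%N).
Qed.

Section Row.
Variables (m : nat) (b c : seq int) (v : seq deco).
Hypothesis m1 : (1 <= m)%N.
Hypothesis sv : size v = m.
Hypothesis inter : forall k, (k < m.-1)%N -> nth 0 b k <= nth 0 c k <= nth 0 b k.+1.

Let Vb := fun j => nth 0 b j.-1.
Let Vc := fun j => nth 0 c j.-1.
Let Dv := fun j => nth dd v j.-1.

Lemma rowcond_okL : rowcond m Vb Vc Dv = okL (links m b c) v.
Proof.
rewrite okL_all; last by rewrite size_links sv prednK.
rewrite size_links /rowcond /Vb /Vc /Dv.
apply/allP/allP => H k.
- rewrite mem_iota add0n => /andP[_ km].
  have [i1 i2] := andP (inter km).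
  rewrite nth_links //.
  have := H k.+1; rewrite mem_iota /= => /(_ _)/andP[]; first by lia.
  have := H k.+2; rewrite mem_iota /= => /(_ _)/andP[]; first by lia.
  move=> _ NW NE _.
  rewrite (eqb3 i1 i2) in NE; rewrite [nth 0 b k == nth 0 b k.+1]eq_sym (eqb3 i1 i2) in NW.
  have m2 : (1 < m)%N by lia.
  move: NE NW; rewrite /lok /= m2 km /=.
  case: (nth 0 b k == nth 0 c k); case: (nth 0 b k.+1 == nth 0 c k);
    case: (nth dd v k) => [x0 y0]; case: (nth dd v k.+1) => [x1 y1];
    by case: x0; case: y0; case: x1; case: y1.
- rewrite mem_iota => /andP[j1 jm].
  apply/andP; split; apply/implyP.
  + case: k j1 jm => [//|k] _ km /andP[/andP[/andP[m2 km'] E] Y].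
    have km2 : (k < m.-1)%N by lia.
    have := H k; rewrite mem_iota add0n km2 /= => /(_ isT).
    have [i1 i2] := andP (inter km2).
    rewrite nth_links // /lok /= (eqb3 i1 i2).
    move: E Y => /= -> -> /=; by case/andP.
  + case: k j1 jm => [//|[|k]] _ km; first by rewrite andbF.
    move=> /andP[/andP[/andP[m2 _] E] X].
    have km2 : (k < m.-1)%N by lia.
    have := H k; rewrite mem_iota add0n km2 /= => /(_ isT).
    have [i1 i2] := andP (inter km2).
    rewrite nth_links // /lok /= [nth 0 b k == nth 0 b k.+1]eq_sym (eqb3 i1 i2).
    move: E X => /= -> -> /=; rewrite !andbT; by case/andP.
Qed.

Lemma rowsp_spL : rowsp m Vb Vc Dv = spL (links m b c) v.
Proof.
rewrite spL_sum; last by rewrite size_links sv prednK.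
rewrite size_links /rowsp -{1}(prednK m1) big_add1 /=.
apply: eq_big_nat => k /andP[_ km].
rewrite nth_links // /lsp /Vb /Vc /Dv /= !(eq_sym (nth 0 c k)).
by [].
Qed.

Lemma rowdb_dblL : rowdb m Dv = dblL v.
Proof. by rewrite dblL_sum sv /rowdb big_add1. Qed.

Lemma rowr_count : rowr m Vb Vc = count negb (fullsR false (links m b c)).
Proof.
rewrite -sumn_count sumnE big_map (big_nth false) size_fullsR size_links prednK //.
rewrite /rowr big_add1 /=.
apply: eq_big_nat => p /andP[_ pm].
rewrite nth_fullsR /Vb /Vc.
case: p pm => [|p] pm /=; first by rewrite andbF.
have pm' : (p < m.-1)%N by lia.
rewrite nth_links //.
case: (ltnP p.+1 m.-1) => h.
  rewrite nth_links //=.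
  have -> : (1 < m)%N by lia.
  done.
rewrite (nth_default (false,false)) ?size_links //= !andbF.
done.
Qed.

Lemma c_mono k k' : (k <= k')%N -> (k' < m.-1)%N -> nth 0 c k <= nth 0 c k'.
Proof.
move=> h1; elim: k' h1 => [|k' IH] h1 h2.
  by have -> : k = 0%N by lia.
case: (ltnP k k'.+1) => h3; last by have -> : k = k'.+1 by lia.
have [i1 i2] := andP (inter (k := k') ltac:(lia)).
have [i3 i4] := andP (inter (k := k'.+1) h2).
apply: le_trans (IH _ _) _; try lia.
Qed.

Lemma nte3_noadj : nte3 m.-1 Vc = noadj (fullsR false (links m b c)).
Proof.
rewrite noadj_all size_fullsR size_links prednK //.
apply/idP/idP.
- move=> H; apply/allP => p; rewrite mem_iota add0n => pm.
  rewrite !nth_fullsR; case: p pm => [|p] pm /=; first by [].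
  apply/negP => /andP[/andP[F1 F2] /andP[F3 F4]].
  have p1 : (p.+2 < m.-1)%N.
    case: (ltnP p.+2 m.-1) => // h.
    have hs : (size (links m b c) <= p.+2)%N by rewrite size_links; lia.
    by move: F4; rewrite nth_default.
  have p0 : (p < m.-1)%N by lia.
  have p2 : (p.+1 < m.-1)%N by lia.
  move: F1 F2 F3 F4; rewrite !nth_links //= => /eqP F1 /eqP F2 /eqP F3 /eqP F4.
  move/allP: H => /(_ p.+1); rewrite mem_iota => /(_ ltac:(lia)).
  move/allP => /(_ p.+2); rewrite mem_iota => /(_ ltac:(lia)).
  move/allP => /(_ p.+3); rewrite mem_iota => /(_ ltac:(lia)).
  by rewrite /Vc /= -F1 F2 -F3 F4 !eqxx !ltnSn.
- move=> H; apply/allP => j1; rewrite mem_iota => /andP[j11 j1m].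
  apply/allP => j2; rewrite mem_iota => /andP[j21 j2m].
  apply/allP => j3; rewrite mem_iota => /andP[j31 j3m].
  apply/negP => /and4P[lt12 lt23 /eqP E12 /eqP E23].
  case: j1 j11 j1m lt12 E12 => [//|q] _ qm lt12 E12.
  move: E12 E23; rewrite /Vc /= => E12 E23.
  have E13 : nth 0 c q = nth 0 c j3.-1 by rewrite E12 E23.
  have hq2 : (q.+2 < m.-1)%N by lia.
  have c01 : nth 0 c q = nth 0 c q.+1.
    apply: le_anti; apply/andP; split; first by apply: c_mono; lia.
    rewrite E13; apply: c_mono; lia.
  have c12 : nth 0 c q.+1 = nth 0 c q.+2.
    apply: le_anti; apply/andP; split; first by apply: c_mono; lia.
    rewrite -c01 E13; apply: c_mono; lia.
  move/allP: H => /(_ q.+1); rewrite mem_iota => /(_ ltac:(lia)).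
  rewrite !nth_fullsR /= !nth_links //; try lia.
  have [i1 i2] := andP (inter (k := q) ltac:(lia)).
  have [i3 i4] := andP (inter (k := q.+1) ltac:(lia)).
  have [i5 i6] := andP (inter (k := q.+2) ltac:(lia)).
  have b1 : nth 0 b q.+1 = nth 0 c q by apply/eqP; rewrite eq_le i2 c01 i3.
  have b2 : nth 0 b q.+2 = nth 0 c q.+1 by apply/eqP; rewrite eq_le i4 c12 i5.
  by rewrite b1 b2 c01 c12 !eqxx.
Qed.

Hypothesis nf4 : forall k, (k.+3 < m.-1)%N -> nth 0 c k != nth 0 c k.+3.

Lemma NoF_links : NoF (links m b c).
Proof.
apply: NoF_all => k.
case: (ltnP k.+3 m.-1) => h; last first.
  by rewrite [nth _ _ k.+3](nth_default (false,false)) ?size_links // !andbF.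
rewrite !nth_links //; try lia.
apply/negP => /andP[/eqP E1 /andP[/eqP E2 /andP[/eqP E3 /andP[/eqP E4 /andP[/eqP E5 /eqP E6]]]]].
by move: (nf4 h); rewrite -E1 E2 -E3 E4 -E5 E6 eqxx.
Qed.

End Row.

Lemma rows_size (T : eqType) (s : seq T) m v : v \in rows_of s m -> size v = m.
Proof.
elim: m v => [|m IH] v /=; first by rewrite inE => /eqP ->.
by case/allpairsPdep => [x [r [_ hr ->]]] /=; rewrite (IH _ hr).
Qed.

Lemma row_main m b c : (1 <= m)%N ->
  (forall k, (k < m.-1)%N -> nth 0 b k <= nth 0 c k <= nth 0 b k.+1) ->
  (forall k, (k.+3 < m.-1)%N -> nth 0 c k != nth 0 c k.+3) ->
  \sum_(v <- rows_of all_decos m)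
     (if rowcond m (fun j => nth 0 b j.-1) (fun j => nth 0 c j.-1) (fun j => nth dd v j.-1)
      then (-1) ^+ (rowsp m (fun j => nth 0 b j.-1) (fun j => nth 0 c j.-1) (fun j => nth dd v j.-1)
                    + rowdb m (fun j => nth dd v j.-1))
      else (0 : int))
  = if nte3 m.-1 (fun j => nth 0 c j.-1) then (2 : int) ^+ rowr m (fun j => nth 0 b j.-1) (fun j => nth 0 c j.-1)
    else 0.
Proof.
move=> m1 inter nf4.
transitivity (Hsum (fun _ => 1) (links m b c)).
  rewrite /Hsum size_links prednK // big_seq [RHS]big_seq.
  apply: eq_bigr => v /rows_size sv.
  by rewrite mul1r /wgt rowcond_okL // rowsp_spL // rowdb_dblL.
have sd : size (nseq m dd) = m by rewrite size_nseq.
rewrite row_link; last exact: (NoF_links b m1 sd nf4).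
by rewrite (nte3_noadj m1 sd inter) (rowr_count b c m1 sd).
Qed.


Definition condF n (V : nat -> nat -> int) (Dd : nat -> nat -> deco) : bool :=
  all (fun i => rowcond i (V i) (V i.-1) (Dd i)) (iota 1 n).
Definition spF n (V : nat -> nat -> int) (Dd : nat -> nat -> deco) : nat :=
  \sum_(1 <= i < n) rowsp i.+1 (V i.+1) (V i) (Dd i.+1).
Definition dbF n (Dd : nat -> nat -> deco) : nat := \sum_(1 <= i < n.+1) rowdb i (Dd i).
Definition rF n (V : nat -> nat -> int) : nat := \sum_(1 <= i < n.+1) rowr i (V i) (V i.-1).
Definition nteF n (V : nat -> nat -> int) : bool := all (fun i => nte3 i (V i)) (iota 1 n.-1).
Definition GTint n (V : nat -> nat -> int) : bool :=
  all (fun i => all (fun j => (V i.+1 j <= V i j) && (V i j <= V i.+1 j.+1)) (iota 1 i)) (iota 1 n.-1).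

Lemma arrowed_E n k A :
  is_arrowed_GT n k A = [&& tri_shape n A, is_GT n k (vals A) & condF n (Defs.val A) (dec A)].
Proof. by []. Qed.
Lemma special_E n A : n_special n A = spF n (Defs.val A) (dec A).
Proof. by []. Qed.
Lemma double_E n A : n_double n A = dbF n (dec A).
Proof. by []. Qed.
Lemma rstat_E n G : r_stat n G = rF n (ent 0 G).
Proof. by []. Qed.
Lemma nte_E n G : no_three_equal n G = nteF n (ent 0 G).
Proof. by []. Qed.
Lemma isGT_E n k G : is_GT n k G = [&& tri_shape n G, nth [::] G n.-1 == k & GTint n (ent 0 G)].
Proof. by []. Qed.

Lemma rowcond_ext m Vb Vc Db Vb' Vc' Db' :
  (forall j, (1 <= j <= m)%N -> Vb j = Vb' j) ->
  (forall j, (1 <= j < m)%N -> Vc j = Vc' j) ->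
  (forall j, (1 <= j <= m)%N -> Db j = Db' j) ->
  rowcond m Vb Vc Db = rowcond m Vb' Vc' Db'.
Proof.
move=> Hb Hc Hd; apply: eq_in_all => j; rewrite mem_iota => /andP[j1 jm].
rewrite (Hb j) ?(Hd j); try lia.
congr andb.
- case: (ltnP j m) => h1.
    by rewrite (Hb j.+1) ?(Hd j.+1) ?(Hc j) //; lia.
  have -> : (j <= m.-1)%N = false by lia.
  by rewrite !andbF.
- case: (ltnP 1 j) => h2.
    by rewrite (Hb j.-1) ?(Hd j.-1) ?(Hc j.-1) //; lia.
  by rewrite !andbF.
Qed.

Lemma rowsp_ext m Vb Vc Db Vb' Vc' Db' :
  (forall j, (1 <= j <= m)%N -> Vb j = Vb' j) ->
  (forall j, (1 <= j < m)%N -> Vc j = Vc' j) ->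
  (forall j, (1 <= j <= m)%N -> Db j = Db' j) ->
  rowsp m Vb Vc Db = rowsp m Vb' Vc' Db'.
Proof.
move=> Hb Hc Hd; apply: eq_big_nat => j /andP[j1 jm].
by rewrite (Hb j) ?(Hb j.+1) ?(Hc j) ?(Hd j) ?(Hd j.+1) //; lia.
Qed.

Lemma rowdb_ext m Db Db' :
  (forall j, (1 <= j <= m)%N -> Db j = Db' j) -> rowdb m Db = rowdb m Db'.
Proof.
move=> Hd; apply: eq_big_nat => j /andP[j1 jm].
by rewrite (Hd j) //; lia.
Qed.

Lemma rowr_ext m Vb Vc Vb' Vc' :
  (forall j, (1 <= j <= m)%N -> Vb j = Vb' j) ->
  (forall j, (1 <= j < m)%N -> Vc j = Vc' j) ->
  rowr m Vb Vc = rowr m Vb' Vc'.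
Proof.
move=> Hb Hc; apply: eq_big_nat => j /andP[j1 jm].
rewrite (Hb j); last by lia.
case: (ltnP 1 j) => h2; last by rewrite !andbF.
case: (ltnP j m) => h1; last by rewrite (_ : (j <= m.-1)%N = false) ?andbF //; lia.
by rewrite (Hc j) ?(Hc j.-1) //; lia.
Qed.

Lemma nte3_ext i Vr Vr' :
  (forall j, (1 <= j <= i)%N -> Vr j = Vr' j) -> nte3 i Vr = nte3 i Vr'.
Proof.
move=> H; apply: eq_in_all => j1; rewrite mem_iota => /andP[a1 b1].
apply: eq_in_all => j2; rewrite mem_iota => /andP[a2 b2].
apply: eq_in_all => j3; rewrite mem_iota => /andP[a3 b3].
by rewrite (H j1) ?(H j2) ?(H j3) //; lia.
Qed.

Lemma ent_rcons_lt (T : Type) (x0 : T) P r i j :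
  (i.-1 < size P)%N -> ent x0 (rcons P r) i j = ent x0 P i j.
Proof. by move=> h; rewrite /ent nth_rcons h. Qed.

Lemma ent_rcons_eq (T : Type) (x0 : T) P r i j :
  i.-1 = size P -> ent x0 (rcons P r) i j = nth x0 r j.-1.
Proof. by move=> h; rewrite /ent nth_rcons h ltnn eqxx. Qed.

Lemma iota1S n : iota 1 n.+1 = iota 1 n ++ [:: n.+1].
Proof. by rewrite -[n.+1]addn1 iotaD /= add1n addn1. Qed.

Lemma condF_S n V Dd :
  condF n.+1 V Dd = condF n V Dd && rowcond n.+1 (V n.+1) (V n) (Dd n.+1).
Proof. by rewrite /condF iota1S all_cat /= andbT. Qed.

Lemma spF_S n V Dd :
  spF n.+1 V Dd = (spF n V Dd + rowsp n.+1 (V n.+1) (V n) (Dd n.+1))%N.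
Proof.
case: n => [|n]; first by rewrite /spF /rowsp !big_geq.
by rewrite /spF big_nat_recr.
Qed.

Lemma dbF_S n Dd : dbF n.+1 Dd = (dbF n Dd + rowdb n.+1 (Dd n.+1))%N.
Proof. by rewrite /dbF big_nat_recr. Qed.

Lemma rF_S n V : rF n.+1 V = (rF n V + rowr n.+1 (V n.+1) (V n))%N.
Proof. by rewrite /rF big_nat_recr. Qed.

Lemma nteF_S n V : nteF n.+1 V = nteF n V && nte3 n (V n).
Proof.
case: n => [|n] //.
by rewrite /nteF -pred_Sn iota1S all_cat /= andbT.
Qed.

Section Ext.
Variables (n : nat) (V V' : nat -> nat -> int) (Dd Dd' : nat -> nat -> deco).
Hypothesis HV : forall i j, (1 <= i <= n)%N -> V i j = V' i j.
Hypothesis HD : forall i j, (1 <= i <= n)%N -> Dd i j = Dd' i j.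

Lemma condF_ext : condF n V Dd = condF n V' Dd'.
Proof.
apply: eq_in_all => i; rewrite mem_iota => /andP[i1 im].
apply: rowcond_ext => j hj; [apply: HV | apply: HV | apply: HD]; lia.
Qed.

Lemma spF_ext : spF n V Dd = spF n V' Dd'.
Proof.
apply: eq_big_nat => i /andP[i1 im].
apply: rowsp_ext => j hj; [apply: HV | apply: HV | apply: HD]; lia.
Qed.

Lemma dbF_ext : dbF n Dd = dbF n Dd'.
Proof.
apply: eq_big_nat => i /andP[i1 im].
apply: rowdb_ext => j hj; apply: HD; lia.
Qed.

Lemma rF_ext : rF n V = rF n V'.
Proof.
apply: eq_big_nat => i /andP[i1 im].
apply: rowr_ext => j hj; apply: HV; lia.
Qed.

Lemma nteF_ext : nteF n V = nteF n V'.
Proof.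
apply: eq_in_all => i; rewrite mem_iota => /andP[i1 im].
apply: nte3_ext => j hj; apply: HV; lia.
Qed.
End Ext.

Lemma big_triS (T : Type) (s : seq T) n (F : seq (seq T) -> int) :
  \sum_(D <- tri_arrays s n.+1) F D =
  \sum_(P <- tri_arrays s n) \sum_(r <- rows_of s n.+1) F (rcons P r).
Proof. exact: big_allpairs_dep. Qed.

Lemma tri_size (T : eqType) (s : seq T) n D : D \in tri_arrays s n -> size D = n.
Proof.
elim: n D => [|n IH] D /=; first by rewrite inE => /eqP ->.
by case/allpairsPdep => [P [r [hP _ ->]]]; rewrite size_rcons (IH _ hP).
Qed.

Definition Asum n (V : nat -> nat -> int) (Dd : nat -> nat -> deco) : int :=
  if condF n V Dd then (-1) ^+ (spF n V Dd + dbF n Dd) else 0.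

Lemma perG n G : size G = n -> GTint n (ent 0 G) ->
  \sum_(D <- tri_arrays all_decos n) Asum n (ent 0 G) (ent dd D)
  = if nteF n (ent 0 G) then (2 : int) ^+ rF n (ent 0 G) else 0.
Proof.
elim: n G => [|n IH] G sG HG.
  by rewrite /= big_cons big_nil /Asum /spF /dbF /rF !big_geq // addr0.
case/lastP: G sG HG => [//|G' b]; rewrite size_rcons => -[sG'] HG.
have HV : forall i j, (1 <= i <= n)%N -> ent 0 (rcons G' b) i j = ent 0 G' i j.
  by move=> i j h; rewrite ent_rcons_lt // sG'; lia.
have HVb : forall j, ent 0 (rcons G' b) n.+1 j = nth 0 b j.-1.
  by move=> j; rewrite ent_rcons_eq.
set c := nth [::] G' n.-1.
have HVc : forall j, (1 <= n)%N -> ent 0 (rcons G' b) n j = nth 0 c j.-1.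
  by move=> j h; rewrite HV ?leqnn ?h.
have HGT' : GTint n (ent 0 G').
  apply/allP => i; rewrite mem_iota => /andP[i1 im].
  move/allP: HG => /(_ i); rewrite mem_iota => /(_ ltac:(lia)) /allP H.
  apply/allP => j hj; move: (H j hj); rewrite !HV //; lia.
have IH' := IH G' sG' HGT'.
pose Vb := fun j => nth 0 b j.-1.
pose Vc := fun j => nth 0 c j.-1.
pose B := fun r : seq deco =>
  if rowcond n.+1 Vb Vc (fun j => nth dd r j.-1)
  then (-1) ^+ (rowsp n.+1 Vb Vc (fun j => nth dd r j.-1) + rowdb n.+1 (fun j => nth dd r j.-1))
  else (0 : int).
have E : forall P r, size P = n ->
  Asum n.+1 (ent 0 (rcons G' b)) (ent dd (rcons P r)) = Asum n (ent 0 G') (ent dd P) * B r.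
  move=> P r sP.
  have HD : forall i j, (1 <= i <= n)%N -> ent dd (rcons P r) i j = ent dd P i j.
    by move=> i j h; rewrite ent_rcons_lt // sP; lia.
  rewrite /Asum condF_S spF_S dbF_S (condF_ext HV HD) (spF_ext HV HD) (dbF_ext HD).
  rewrite (@rowcond_ext _ _ _ _ Vb Vc (fun j => nth dd r j.-1)); first last.
  - by move=> j _; rewrite ent_rcons_eq // sP.
  - by move=> j h; rewrite HVc //; lia.
  - by move=> j _; rewrite HVb.
  rewrite (@rowsp_ext _ _ _ _ Vb Vc (fun j => nth dd r j.-1)); first last.
  - by move=> j _; rewrite ent_rcons_eq // sP.
  - by move=> j h; rewrite HVc //; lia.
  - by move=> j _; rewrite HVb.
  rewrite (@rowdb_ext _ _ (fun j => nth dd r j.-1)); last first.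
    by move=> j _; rewrite ent_rcons_eq // sP.
  rewrite /B; case: (condF _ _ _) => /=; last by rewrite mul0r.
  case: (rowcond _ _ _ _) => /=; last by rewrite mulr0.
  by rewrite -exprD addnACA.
rewrite big_triS.
transitivity (\sum_(P <- tri_arrays all_decos n) Asum n (ent 0 G') (ent dd P) *
              \sum_(r <- rows_of all_decos n.+1) B r).
  rewrite big_seq [RHS]big_seq; apply: eq_bigr => P /tri_size sP.
  by rewrite big_distrr; apply: eq_bigr => r _; rewrite E.
rewrite -big_distrl IH'.
rewrite nteF_S rF_S (nteF_ext HV) (rF_ext HV).
rewrite (@nte3_ext _ _ Vc); last by move=> j h; rewrite HVc //; lia.
rewrite (@rowr_ext _ _ _ Vb Vc); first last.
- by move=> j h; rewrite HVc //; lia.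
- by move=> j _; rewrite HVb.
case Hn: (nteF n (ent 0 G')); last by rewrite /= mul0r.
have RM : \sum_(r <- rows_of all_decos n.+1) B r =
   if nte3 n Vc then (2:int) ^+ rowr n.+1 Vb Vc else 0.
  have GTr : forall i j, (1 <= i <= n)%N -> (1 <= j <= i)%N ->
      ent 0 (rcons G' b) i.+1 j <= ent 0 (rcons G' b) i j <= ent 0 (rcons G' b) i.+1 j.+1.
    move=> i j hi hj.
    move/allP: HG => /(_ i); rewrite mem_iota => /(_ ltac:(lia)) /allP /(_ j).
    by rewrite mem_iota => /(_ ltac:(lia)).
  apply: row_main => //= k hk.
    have := GTr n k.+1 ltac:(lia) ltac:(lia).
    by rewrite !HVb HVc //; lia.
  apply/negP => /eqP Ec.
  have n1 : (1 <= n.-1)%N by lia.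
  have := GTr n.-1 k.+1 ltac:(lia) ltac:(lia).
  have := GTr n.-1 k.+2 ltac:(lia) ltac:(lia).
  have := GTr n.-1 k.+3 ltac:(lia) ltac:(lia).
  rewrite prednK; last by lia.
  rewrite !HVc ?HV /=; try lia.
  move/allP: Hn => /(_ n.-1); rewrite mem_iota => /(_ ltac:(lia)).
  move/allP => /(_ k.+1); rewrite mem_iota => /(_ ltac:(lia)).
  move/allP => /(_ k.+2); rewrite mem_iota => /(_ ltac:(lia)).
  move/allP => /(_ k.+3); rewrite mem_iota => /(_ ltac:(lia)).
  rewrite !ltnSn /= => H3 h1 h2 h3.
  case/andP: h1 => x1 x2; case/andP: h2 => x3 x4; case/andP: h3 => x5 x6.
  move: H3; rewrite Ec in x5.
  have -> : ent 0 G' n.-1 k.+1 = ent 0 G' n.-1 k.+2.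
    apply: le_anti; rewrite (le_trans x6 x3) /=.
    exact: le_trans x4 (le_trans x1 (le_trans x2 x5)).
  have -> : ent 0 G' n.-1 k.+2 = ent 0 G' n.-1 k.+3.
    apply: le_anti; rewrite (le_trans x4 x1) /=.
    exact: le_trans x2 (le_trans x5 (le_trans x6 x3)).
  by rewrite eqxx.
rewrite RM.
case: (nte3 n Vc) => /=; last by rewrite mulr0.
by rewrite exprD.
Qed.


Definition zipT (G : seq (seq int)) (D : seq (seq deco)) : seq (seq (int * deco)) :=
  map (fun p => zip p.1 p.2) (zip G D).

Lemma R1 (s : seq int) (t : seq deco) m (F : seq (int * deco) -> int) :
  \sum_(r <- rows_of [seq (x, d) | x <- s, d <- t] m) F r =
  \sum_(u <- rows_of s m) \sum_(w <- rows_of t m) F (zip u w).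
Proof.
elim: m F => [|m IH] F; first by rewrite /= !big_cons !big_nil !addr0.
rewrite big_rowsS big_allpairs big_rowsS.
apply: eq_bigr => a _.
rewrite (eq_bigr (fun d => \sum_(u <- rows_of s m) \sum_(w <- rows_of t m) F ((a, d) :: zip u w)));
  last by move=> d _; rewrite IH.
rewrite exchange_big /=; apply: eq_bigr => u _.
by rewrite big_rowsS.
Qed.

Lemma T1 (s : seq int) (t : seq deco) m (F : seq (seq (int * deco)) -> int) :
  \sum_(A <- tri_arrays [seq (x, d) | x <- s, d <- t] m) F A =
  \sum_(G <- tri_arrays s m) \sum_(D <- tri_arrays t m) F (zipT G D).
Proof.
elim: m F => [|m IH] F; first by rewrite /= !big_cons !big_nil !addr0.
rewrite big_triS IH big_triS.
rewrite big_seq [RHS]big_seq; apply: eq_bigr => G /tri_size sG.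
rewrite [RHS]exchange_big [RHS]big_triS big_seq [RHS]big_seq.
apply: eq_bigr => D /tri_size sD.
rewrite R1 exchange_big; apply: eq_bigr => u _; apply: eq_bigr => w _.
by rewrite /zipT zip_rcons ?sG ?sD // map_rcons.
Qed.

Lemma tri_rows (T : eqType) (s : seq T) m G : G \in tri_arrays s m ->
  forall i, size (nth [::] G i) = if (i < m)%N then i.+1 else 0%N.
Proof.
elim: m G => [|m IH] G /=.
  by rewrite inE => /eqP -> i; rewrite nth_nil.
case/allpairsPdep => [P [r [hP hr ->]]] i.
rewrite nth_rcons (tri_size hP); case: (ltngtP i m) => h.
- by rewrite (IH _ hP) h ltnS ltnW.
- by rewrite ltnNge h.
- by rewrite h ltnSn (@rows_size _ s m.+1 r hr).
Qed.

Lemma nth_zipT G D i : size G = size D ->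
  nth [::] (zipT G D) i = zip (nth [::] G i) (nth [::] D i).
Proof.
elim: G D i => [|g G IH] [|d D] [|i] //= [sGD]; rewrite ?nth_nil //.
exact: IH.
Qed.

Section Zip.
Variables (G : seq (seq int)) (D : seq (seq deco)).
Hypothesis sGD : size G = size D.
Hypothesis rGD : forall i, size (nth [::] G i) = size (nth [::] D i).

Lemma vals_zipT : vals (zipT G D) = G.
Proof.
apply: (@eq_from_nth _ [::]).
  by rewrite /vals /zipT !size_map size_zip sGD minnn.
move=> i hi.
have hi' : (i < size (zipT G D))%N by move: hi; rewrite /vals size_map.
rewrite /vals (nth_map [::] _ _ hi') nth_zipT //.
by rewrite -/(unzip1 _) unzip1_zip // rGD.
Qed.

Lemma dec_zipT i j : dec (zipT G D) i j = ent dd D i j.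
Proof. by rewrite /dec /ent nth_zipT // nth_zip. Qed.

Lemma tri_shape_zipT n : tri_shape n (zipT G D) = tri_shape n G.
Proof.
rewrite /tri_shape /zipT size_map size_zip sGD minnn -sGD; congr andb.
apply: eq_all => i.
by rewrite -/(zipT G D) nth_zipT // size_zip rGD minnn.
Qed.
End Zip.

Theorem proposition2p1 (n : nat) (k : seq int) :
  (1 <= n)%N -> size k = n -> sorted <=%R k ->
  \sum_(A <- AGT_candidates n k | is_arrowed_GT n k A)
     (-1) ^+ (n_special n A + n_double n A)
  = \sum_(G <- GT_candidates n k | is_GT n k G && no_three_equal n G)
     (2 : int) ^+ r_stat n G.
Proof.
move=> _ _ _.
rewrite big_mkcond [RHS]big_mkcond /AGT_candidates /GT_candidates T1.
rewrite big_seq [RHS]big_seq; apply: eq_bigr => G hG.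
have sG := tri_size hG.
transitivity (if is_GT n k G then
   \sum_(D <- tri_arrays all_decos n) Asum n (ent 0 G) (ent dd D) else 0).
  case HG: (is_GT n k G); last first.
    rewrite big1_seq // => D /andP[_ hD].
    have sGD : size G = size D by rewrite sG (tri_size hD).
    have rGD : forall i, size (nth [::] G i) = size (nth [::] D i).
      by move=> i; rewrite (tri_rows hG) (tri_rows hD).
    by rewrite arrowed_E vals_zipT // HG andbF.
  rewrite big_seq [RHS]big_seq; apply: eq_bigr => D hD.
  have sGD : size G = size D by rewrite sG (tri_size hD).
  have rGD : forall i, size (nth [::] G i) = size (nth [::] D i).
    by move=> i; rewrite (tri_rows hG) (tri_rows hD).
  have HD : forall i j, (1 <= i <= n)%N -> dec (zipT G D) i j = ent dd D i j.
    by move=> i j _; rewrite dec_zipT.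
  have HV : forall i j, (1 <= i <= n)%N -> Defs.val (zipT G D) i j = ent 0 G i j.
    by move=> i j _; rewrite /Defs.val vals_zipT.
  rewrite arrowed_E special_E double_E tri_shape_zipT // vals_zipT // HG /=.
  move/andP: HG => [-> /andP[_ _]] /=.
  by rewrite /Asum (condF_ext HV HD) (spF_ext HV HD) (dbF_ext HD).
case HG: (is_GT n k G) => //.
move/and3P: HG => [_ _ Hint].
by rewrite perG // nte_E rstat_E.
Qed.
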